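(* Let $x_1, \ldots, x_q \in \mathbb{C}$ and let $r$ be an integer with $1 \leqslant r < q$. Then $$\sum_{s=1}^q (-1)^{s-1} \sum_{1 \leqslant k_1 < \cdots < k_s \leqslant q}\ \sum_{\substack{j_{k_1}, \ldots, j_{k_s} \geqslant 0\\ j_{k_1} + \cdots + j_{k_s} = r}} \binom{2r}{2j_{k_1}, \ldots, 2j_{k_s}} x_{k_1}^{j_{k_1}} \cdots x_{k_s}^{j_{k_s}} = 0,$$ where $\binom{2r}{2j_{k_1}, \ldots, 2j_{k_s}} = \frac{(2r)!}{(2j_{k_1})! \cdots (2j_{k_s})!}$ and the $j$'s are integers. *)

(* Defs.v *)
From HB Require Import structures.
From mathcomp Require Import all_boot all_order all_algebra.
From mathcomp Require Import complex.
From mathcomp Require Import Rstruct.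
Set Implicit Arguments. Unset Strict Implicit. Unset Printing Implicit Defensive.
Import Order.TTheory GRing.Theory Num.Theory.

Definition Cplx : Type := (Rdefinitions.R)[i].

(* Main.v *)
Require Import Defs.
From HB Require Import structures.
From mathcomp Require Import all_boot all_order all_algebra.
From mathcomp Require Import complex.
From mathcomp Require Import Rstruct.
Import Order.TTheory GRing.Theory Num.Theory.
Local Open Scope ring_scope.

Lemma alt_sum (R : numDomainType) n (T : {set 'I_n}) k0 : k0 \notin T -> T != set0 ->
  \sum_(S : {set 'I_n}) (if T \subset S then (-1)^+(#|S|.-1) else 0 : R) = 0.
Proof.
move=> k0T Tn0.
set h := fun S : {set 'I_n} => if k0 \in S then S :\ k0 else k0 |: S.
have hK : involutive h.
  move=> S; rewrite /h; case: (boolP (k0 \in S)) => kS.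
    by rewrite setD11 setD1K.
  by rewrite setU11 setU1K.
set s := \sum_(S : {set 'I_n}) _.
have hs : s = - s.
  rewrite {1}/s (reindex_inj (inv_inj hK)) /s -sumrN; apply: eq_bigr => S _.
  have sub : (T \subset h S) = (T \subset S).
    rewrite /h; case: ifP => kS.
      apply/idP/idP => H; first exact: subset_trans H (subD1set _ _).
      apply/subsetP => y yT; rewrite !inE (subsetP H _ yT) andbT.
      by apply: contraNneq k0T => <-.
    apply/idP/idP => H; last exact: subset_trans H (subsetUr _ _).
    apply/subsetP => y yT; have := subsetP H _ yT; rewrite !inE => /orP[/eqP ey|//].
    by move: k0T; rewrite -ey yT.
  rewrite sub; case: ifP => TS; last by rewrite oppr0.
  have [y yT] : exists y, y \in T by apply/set0Pn.
  have yS : y \in S := subsetP TS _ yT.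
  rewrite /h; case: ifP => kS.
    have := cardsD1 k0 S; rewrite kS add1n => ->.
    have : (0 < #|S :\ k0|)%N by apply/card_gt0P; exists y; rewrite !inE yS andbT; apply: contraNneq k0T => <-.
    by case: #|_| => // m _ /=; rewrite exprS mulN1r opprK.
  rewrite cardsU1 kS add1n /=.
  have : (0 < #|S|)%N by apply/card_gt0P; exists y.
  by case: #|_| => // m _ /=; rewrite exprS mulN1r.
have : s *+ 2 == 0 by rewrite mulr2n {1}hs addNr.
by rewrite mulrn_eq0 /= => /eqP.
Qed.

Lemma prodS (R : comRingType) n (S : {set 'I_n}) (F : 'I_n -> R) :
  (forall k, k \notin S -> F k = 1) -> \prod_(k in S) F k = \prod_k F k.
Proof.
move=> H; rewrite big_mkcond; apply: eq_bigr => k _; case: ifP => // kS.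
by rewrite H ?kS.
Qed.

Lemma sumS n (S : {set 'I_n}) (F : 'I_n -> nat) :
  (forall k, k \notin S -> F k = 0%N) -> (\sum_(k in S) F k = \sum_k F k)%N.
Proof.
move=> H; rewrite big_mkcond; apply: eq_bigr => k _; case: ifP => // kS.
by rewrite H ?kS.
Qed.

Theorem lemma1 (q r : nat) (x : 'I_q -> Cplx) (hr1 : (1 <= r)%N) (hrq : (r < q)%N) :
  \sum_(S : {set 'I_q} | S != set0)
     (-1) ^+ (#|S|.-1) *
     \sum_(j : {ffun 'I_q -> 'I_r.+1} |
             ((\sum_(k in S) (j k : nat))%N == r) &&
             [forall k, (k \notin S) ==> ((j k : nat) == 0%N)])
        (((2 * r)`!)%:R / (\prod_(k in S) ((2 * j k)`!)%:R)
         * \prod_(k in S) x k ^+ (j k : nat)) = 0.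
Proof.
under eq_bigr => S _ do rewrite big_mkcond mulr_sumr.
rewrite exchange_big /=.
rewrite big1 // => j _.
set T := [set k | (j k : nat) != 0%N].
have fT (S : {set 'I_q}) : [forall k, (k \notin S) ==> ((j k : nat) == 0%N)] = (T \subset S).
  apply/idP/idP => [/forallP H|TS0].
    apply/subsetP => k; rewrite inE => jk; apply/negPn/negP => kS.
    by move: (H k); rewrite kS /= (negbTE jk).
  apply/forallP => k; apply/implyP => kS; apply: contraR kS => jk; apply: (subsetP TS0); rewrite inE.
  exact: jk.
have sS (S : {set 'I_q}) : T \subset S -> (\sum_(k in S) (j k : nat) = \sum_k (j k : nat))%N.
  move=> TS; apply: sumS => k kS; apply/eqP.
  by move: (fT S); rewrite TS => /forallP/(_ k); rewrite (negbTE kS).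
have [hs|hs] := eqVneq (\sum_k (j k : nat))%N r; last first.
  rewrite big1 // => S _; case: ifP; last by rewrite mulr0.
  by rewrite fT => /andP[]; move=> + TS; rewrite sS // (negbTE hs).
have [k0 k0T] : exists k0, k0 \notin T.
  case: (pickP [pred k | k \notin T]) => [k0 Hk0|none]; first by exists k0.
  have : (#|T| <= r)%N.
    rewrite -hs -sum1_card big_mkcond /=; apply: leq_sum => k _.
    by case: ifP => //; rewrite inE lt0n.
  have : (#|[set: 'I_q]| <= #|T|)%N.
    apply: subset_leq_card; apply/subsetP => k _; have := none k; by move/negbFE.
  by rewrite cardsT card_ord => /leq_trans H /H; rewrite leqNgt hrq.
have Tn0 : T != set0.
  apply/set0Pn; case: (pickP [in T]) => [k1 Hk1|none]; first by exists k1.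
  move: hr1; rewrite -hs big1 // => k _; have := none k; rewrite /= inE.
  by move/negbFE/eqP.
set W := (((2 * r)`!)%:R / (\prod_k ((2 * j k)`!)%:R : Cplx)
         * \prod_k x k ^+ (j k : nat)).
transitivity (\sum_(S : {set 'I_q}) (if T \subset S then (-1) ^+ #|S|.-1 else 0 : Cplx) * W); last first.
  by rewrite -mulr_suml (@alt_sum _ _ _ _ k0T Tn0) mul0r.
rewrite big_mkcond /=; apply: eq_bigr => S _.
case: (boolP (T \subset S)) => TS; last first.
  case: ifP => _; last by rewrite mul0r.
  case: ifP => [/andP[_ H]|_]; last by rewrite mulr0 mul0r.
  by case/negP: TS; rewrite -fT; exact: H.
have Sn0 : S != set0.
  by apply: contraNneq Tn0 => S0; move: TS; rewrite S0 subset0.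
have offS k : k \notin S -> (j k : nat) = 0%N.
  move=> kS; apply/eqP; move: (fT S); rewrite TS => /forallP/(_ k).
  by rewrite kS.
case: ifP => [_|/negbT/negP[]]; last exact: Sn0.
case: ifP => [_|/negbT/negP[]]; last first.
  apply/andP; split; first by apply/eqP; exact: (eq_trans (sS S TS) hs).
  by have := fT S; rewrite TS => H'; exact: H'.
congr (_ * _); rewrite /W.
rewrite (@prodS _ _ S (fun k => ((2 * j k)`!)%:R : Cplx)); last first.
  by move=> k /offS ->.
rewrite (@prodS _ _ S (fun k => x k ^+ (j k : nat))) //.
by move=> k /offS ->.
Qed.
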